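(* Let $G=(V,E)$ be an undirected graph on $n$ vertices with integral edge weights (capacities) in $[0,W]$, and let $s,t\in V$. Then every non-circular $s$-$t$ flow of value $f$ in $G$ satisfies $\sum_{e\in E} |\phi(e)| = O(n\sqrt{fW})$, where $\phi(e)$ is the amount of flow carried by edge $e$ and the implied constant is absolute.
   Context: An $s$-$t$ flow assigns to each edge a direction and an amount of flow not exceeding its weight, with flow conservation at every vertex other than $s,t$; its value $f$ is the net flow leaving $s$. The flow is non-circular if there is no directed cycle of edges each carrying positive flow. *)

(* Defs.v *)
From mathcomp Require Import all_boot all_order all_algebra.
Set Implicit Arguments. Unset Strict Implicit. Unset Printing Implicit Defensive.
Import Order.TTheory GRing.Theory Num.Theory.
Local Open Scope ring_scope.

(* An undirected simple graph on the finite vertex type V with integral edge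
   weights is a symmetric capacity function cap : V -> V -> nat
   (cap x y = 0 means "no edge / edge of weight 0"). *)
Definition sym_cap (V : finType) (cap : V -> V -> nat) : Prop :=
  forall x y, cap x y = cap y x.

(* A flow is encoded as a skew-symmetric function phi : phi x y > 0 means that
   the edge {x,y} is directed from x to y and carries phi x y units. *)
Definition is_st_flow (R : realFieldType) (V : finType) (cap : V -> V -> nat)
    (s t : V) (phi : V -> V -> R) : Prop :=
  [/\ forall x y, phi x y = - phi y x,
      forall x y, `|phi x y| <= (cap x y)%:R &
      forall v, v != s -> v != t -> \sum_(u : V) phi v u = 0].

Definition flow_value (R : realFieldType) (V : finType) (s : V)
    (phi : V -> V -> R) : R := \sum_(u : V) phi s u.

Definition noncircular (R : realFieldType) (V : finType) (phi : V -> V -> R)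
    : Prop :=
  forall c : seq V, c != [::] -> ~~ cycle (fun x y => 0 < phi x y) c.

(* sum over edges e of |phi(e)|: each unordered pair counted once *)
Definition flow_total (R : realFieldType) (V : finType) (phi : V -> V -> R) : R :=
  (\sum_(x : V) \sum_(y : V) `|phi x y|) / 2.

(* Main.v *)
Require Import Defs.
From mathcomp Require Import all_boot all_order all_algebra.
From mathcomp Require Import zify ring lra.
Import Order.TTheory GRing.Theory Num.Theory.
Local Open Scope ring_scope.

Lemma topo_order (R : realFieldType) (V : finType) (phi : V -> V -> R) :
  noncircular phi -> exists p : V -> nat,
    [/\ injective p, forall v, (p v < #|V|)%N &
        forall u v, 0 < phi u v -> (p u < p v)%N].
Proof.
move=> nc.
pose e : rel V := fun x y => 0 < phi x y.
pose rc v := #|[set w | connect e w v]|.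
have rc_lt u v : e u v -> (rc u < rc v)%N.
  move=> euv; apply: proper_card; apply/properP; split.
    apply/subsetP => w; rewrite !inE => cwu.
    by apply: connect_trans cwu _; apply: connect1.
  exists v; rewrite !inE ?connect0 //.
  apply/negP => /connectP [q pq lastq].
  have /negP := nc (v :: q) isT; apply.
  by rewrite /= rcons_path pq -lastq.
pose k v := (rc v * #|V| + enum_rank v)%N.
have k_lt u v : e u v -> (k u < k v)%N.
  move=> /rc_lt h; rewrite /k.
  have h1 := leq_mul h (leqnn #|V|).
  have ha := ltn_ord (enum_rank u); have hb := ltn_ord (enum_rank v).
  move: h1 ha hb; rewrite mulSn.
  move: (nat_of_ord (enum_rank u)) (nat_of_ord (enum_rank v)) => a b. move: (rc u * #|V|)%N (rc v * #|V|)%N => x y H1 Ha _. apply: (leq_trans _ (leq_addr b y)); apply: leq_trans H1; rewrite [(#|V| + x)%N]addnC ltn_add2l; exact: Ha.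
have k_inj : injective k.
  move=> u v; rewrite /k => h.
  have := congr1 (fun x => x %% #|V|)%N h.
  rewrite !modnMDl !modn_small ?ltn_ord // => /val_inj.
  exact: enum_rank_inj.
pose p v := #|[set w | (k w < k v)%N]|.
have p_lt u v : (k u < k v)%N -> (p u < p v)%N.
  move=> h; apply: proper_card; apply/properP; split.
    by apply/subsetP => w; rewrite !inE => /ltn_trans; apply.
  by exists u; rewrite !inE ?h // ltnn.
exists p; split.
- move=> u v puv; apply: k_inj.
  case: (ltngtP (k u) (k v)) => // /p_lt; by rewrite puv ltnn.
- move=> v; rewrite -cardsT; apply: proper_card; apply/properP; split.
    exact: subsetT.
  by exists v; rewrite !inE ?ltnn.
- by move=> u v /k_lt /p_lt.
Qed.

Lemma card_le_inj (V : finType) (A : {pred V}) (g : V -> nat) (m : nat) :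
  {in A &, injective g} -> {in A, forall v, (g v < m)%N} -> (#|A| <= m)%N.
Proof.
move=> ginj gA; rewrite cardE -(size_map g) -[m in (_ <= m)%N](size_iota 0 m).
apply: uniq_leq_size.
  by rewrite map_inj_in_uniq ?enum_uniq // => x y; rewrite !mem_enum; apply: ginj.
move=> _ /mapP [v vA ->]; rewrite mem_iota /= add0n; apply: gA; by rewrite -mem_enum.
Qed.

Lemma sum_bool_card (V : finType) (b : pred V) :
  (\sum_(v : V) nat_of_bool (b v))%N = #|b|.
Proof.
rewrite -sum1_card [RHS]big_mkcond /=; apply: eq_bigr => v _; rewrite unfold_in; by case: (b v).
Qed.

Lemma pick_m (R : realFieldType) (f w : R) (n : nat) :
  0 <= f -> 0 < w -> f <= n%:R * w ->
  exists m : nat, (m ^ 2)%:R * w <= f /\ f < (m.+1 ^ 2)%:R * w.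
Proof.
move=> f0 w0 fn.
pose P := fun m : nat => (m ^ 2)%:R * w <= f.
have exP : exists i, P i by exists 0%N; rewrite /P exp0n // mul0r.
have ubP : forall i, P i -> (i <= n)%N.
  move=> i; rewrite /P => h.
  have : (i ^ 2)%:R * w <= n%:R * w by apply: le_trans fn.
  rewrite ler_pM2r // ler_nat => h2.
  case: i h h2 => // i _ h2; apply: leq_trans h2; by rewrite expnS leq_pmulr ?expn_gt0.
case: (ex_maxnP exP ubP) => m Pm mmax.
exists m; split => //.
rewrite ltNge; apply/negP => h.
have := mmax m.+1 h; by rewrite ltnn.
Qed.

Theorem mainTheorem12 (R : rcfType) :
  exists C : R, 0 < C /\
  forall (V : finType) (W : nat) (cap : V -> V -> nat) (s t : V)
         (phi : V -> V -> R),
    sym_cap cap ->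
    (forall x y, (cap x y <= W)%N) ->
    is_st_flow cap s t phi ->
    noncircular phi ->
    0 <= flow_value s phi ->
    flow_total phi <= C * (#|V|)%:R * Num.sqrt (flow_value s phi * W%:R).
Proof.
exists 2; split => //.
move=> V W cap s t phi symc capW [skew capb cons] nc f0.
set f := flow_value s phi.
set n := #|V|.
have rhs0 : 0 <= 2 * n%:R * Num.sqrt (f * W%:R).
  by rewrite mulr_ge0 ?sqrtr_ge0 // mulr_ge0.
have phiW x y : `|phi x y| <= W%:R.
  by apply: le_trans (capb x y) _; rewrite ler_nat.
have [W0|Wpos] := eqVneq W 0%N.
  apply: le_trans rhs0; rewrite /flow_total big1 ?mul0r // => x _.
  rewrite big1 // => y _; apply: le_anti; rewrite normr_ge0 andbT.
  by have := phiW x y; rewrite W0 mulr0n.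
have W0 : 0 < W%:R :> R by rewrite ltr0n lt0n.
have phi0 x : phi x x = 0 by have := skew x x; lra.
pose net u := \sum_v phi u v.
have fn : f <= n%:R * W%:R.
  rewrite /f /flow_value mulrC mulr_natr -sumr_const.
  by apply: ler_sum => u _; apply: le_trans (ler_norm _) (phiW _ _).
have [m [hm1 hm2]] := @pick_m R f W%:R n f0 W0 fn.
have [p [pinj pn pmono]] := @topo_order R V phi nc.
pose P u := (p u)%:R : R.
have Pn u : P u <= n%:R by rewrite ler_nat ltnW.
have P0 u : 0 <= P u by rewrite ler0n.
have pair_nonneg u v : 0 <= phi u v * (P v - P u).
  have [pos|neg|<-] := ltrgtP 0 (phi u v); last by rewrite mul0r.
    have := pmono _ _ pos; rewrite -(ltr_nat R) -/(P u) -/(P v) => h.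
    by rewrite mulr_ge0 ?subr_ge0 // ltW.
  have pos : 0 < phi v u by rewrite skew oppr_lt0 in neg.
  have := pmono _ _ pos; rewrite -(ltr_nat R) -/(P u) -/(P v) => h.
  nra.
have Z : \sum_u net u = 0.
  have : \sum_u net u = - \sum_u net u.
    rewrite /net [LHS]exchange_big /= -sumrN; apply: eq_bigr => v _.
    rewrite -sumrN; apply: eq_bigr => u _; exact: skew.
  lra.
have D_eq : \sum_u \sum_v phi u v * (P v - P u) = - 2 * \sum_u P u * net u.
  rewrite (eq_bigr (fun u => \sum_v phi u v * P v - P u * net u)); last first.
    move=> u _; rewrite /net mulr_sumr -sumrB; apply: eq_bigr => v _.
    by rewrite mulrBr [phi u v * P u]mulrC.
  rewrite sumrB exchange_big /=.
  rewrite (eq_bigr (fun v => - (P v * net v))); last first.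
    move=> v _; rewrite /net mulr_sumr -sumrN; apply: eq_bigr => u _.
    by rewrite skew; ring.
  rewrite sumrN; ring.
have netsum : \sum_u P u * net u = (P s - P t) * f.
  have -> : \sum_u P u * net u = \sum_u (P u - P t) * net u.
    rewrite (eq_bigr (fun u => (P u - P t) * net u + P t * net u)); last first.
      by move=> u _; ring.
    by rewrite big_split /= -mulr_sumr Z mulr0 addr0.
  rewrite (bigD1 s) //= big1 ?addr0 // => u us.
  have [->|ut] := eqVneq u t; first by rewrite subrr mul0r.
  by rewrite /net cons // mulr0.
have D_bd : \sum_u \sum_v phi u v * (P v - P u) <= 2 * n%:R * f.
  rewrite D_eq netsum; have := Pn t; have := P0 s; have f0f : 0 <= f := f0; nra.
pose near u v := [&& u != v, (p v <= p u + m)%N & (p u <= p v + m)%N].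
have pair_bd u v :
    `|phi u v| <= W%:R * (near u v)%:R + phi u v * (P v - P u) / (m.+1)%:R.
  have [<-|neq] := eqVneq u v.
    by rewrite phi0 normr0 subrr mulr0 mul0r addr0 /near eqxx /= mulr0.
  have t0 : 0 <= phi u v * (P v - P u) / (m.+1)%:R.
    by rewrite divr_ge0 ?pair_nonneg.
  case: (boolP ((p v <= p u + m)%N && (p u <= p v + m)%N)) => hn.
    rewrite /near neq hn /= mulr1.
    by apply: le_trans (phiW u v) _; rewrite lerDl.
  rewrite /near neq (negbTE hn) /= mulr0 add0r.
  rewrite ler_pdivlMr ?ltr0n //.
  rewrite -(ger0_norm (pair_nonneg u v)) normrM.
  apply: ler_wpM2l => //.
  rewrite ler_normr; move: hn; rewrite negb_and -!ltnNge => /orP [] h.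
    apply/orP; left.
    have : (p u + m.+1 <= p v)%N by rewrite addnS.
    rewrite -(ler_nat R) natrD -/(P u) -/(P v); lra.
  apply/orP; right.
  have : (p v + m.+1 <= p u)%N by rewrite addnS.
  rewrite -(ler_nat R) natrD -/(P u) -/(P v); lra.
have count u : \sum_v (near u v)%:R <= (2 * m)%:R :> R.
  rewrite -natr_sum ler_nat.
  pose A1 := [pred v | (p u < p v)%N && (p v <= p u + m)%N].
  pose A2 := [pred v | (p v < p u)%N && (p u <= p v + m)%N].
  have c1 : (#|A1| <= m)%N.
    apply: (@card_le_inj _ _ (fun v => p v - p u - 1)%N).
      move=> x y; rewrite !inE /= => /andP [h1 _] /andP [h2 _] h.
      apply: pinj; lia.
    move=> x; rewrite inE /= => /andP [h1 h2]; lia.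
  have c2 : (#|A2| <= m)%N.
    apply: (@card_le_inj _ _ (fun v => p u - p v - 1)%N).
      move=> x y; rewrite !inE /= => /andP [h1 _] /andP [h2 _] h.
      apply: pinj; lia.
    move=> x; rewrite inE /= => /andP [h1 h2]; lia.
  apply: (@leq_trans (\sum_v (nat_of_bool (A1 v) + nat_of_bool (A2 v)))%N).
    apply: leq_sum => v _; rewrite /near /A1 /A2 /=.
    have [<-|neq] := eqVneq u v; first by [].
    have : p u != p v by apply: contra neq => /eqP /pinj ->.
    case: (ltngtP (p u) (p v)) => //= _ _;
      by case: (p v <= p u + m)%N; case: (p u <= p v + m)%N.
  rewrite big_split /= !sum_bool_card; apply: (leq_trans (leq_add c1 c2)); lia.
have S_bd : \sum_u \sum_v `|phi u v| <=
    W%:R * (\sum_u \sum_v (near u v)%:R) +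
    (\sum_u \sum_v phi u v * (P v - P u)) / (m.+1)%:R.
  apply: le_trans (_ : \sum_u \sum_v (W%:R * (near u v)%:R +
      phi u v * (P v - P u) / (m.+1)%:R) <= _).
    by apply: ler_sum => u _; apply: ler_sum => v _; exact: pair_bd.
  rewrite mulr_sumr mulr_suml -big_split /=; apply: ler_sum => u _.
  by rewrite mulr_sumr mulr_suml -big_split.
have cnt : \sum_u \sum_v (near u v)%:R <= n%:R * (2 * m)%:R :> R.
  apply: le_trans (_ : \sum_(u : V) (2 * m)%:R <= _).
    by apply: ler_sum => u _; exact: count.
  by rewrite sumr_const -[X in X <= _](mulr_natl ((2 * m)%:R : R)).
have sq0 : 0 <= Num.sqrt (f * W%:R) by rewrite sqrtr_ge0.
have sqsq : Num.sqrt (f * W%:R) ^+ 2 = f * W%:R by rewrite sqr_sqrtr ?mulr_ge0.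
have a_bd : m%:R * W%:R <= Num.sqrt (f * W%:R).
  move: hm1 sqsq sq0; rewrite natrX; set q := Num.sqrt _ => h1 h2 h3.
  have w0 : 0 <= W%:R :> R by rewrite ler0n.
  have m0 : 0 <= m%:R :> R by rewrite ler0n.
  rewrite leNgt; apply/negP => h4.
  have : q ^+ 2 < (m%:R * W%:R) ^+ 2 by rewrite ltr_pXn2r // ?nnegrE ?mulr_ge0.
  nra.
have m1 : 0 < (m.+1)%:R :> R by rewrite ltr0n.
have b_bd : f / (m.+1)%:R <= Num.sqrt (f * W%:R).
  rewrite ler_pdivrMr //.
  move: hm2 sqsq sq0; rewrite natrX; set q := Num.sqrt _ => h1 h2 h3.
  have w0 : 0 <= W%:R :> R by rewrite ler0n.
  have f0f : 0 <= f := f0.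
  rewrite leNgt; apply/negP => h4.
  have hq : 0 <= q * (m.+1)%:R by rewrite mulr_ge0 // ltW.
  have : (q * (m.+1)%:R) ^+ 2 < f ^+ 2 by rewrite ltr_pXn2r // nnegrE.
  nra.
rewrite /flow_total.
have : \sum_u \sum_v `|phi u v| <= W%:R * (n%:R * (2 * m)%:R) + 2 * n%:R * f / (m.+1)%:R.
  apply: le_trans S_bd _; apply: lerD.
    by rewrite ler_pM2l.
  by rewrite ler_pM2r ?invr_gt0.
move=> hX.
have e : W%:R * (n%:R * (2 * m)%:R) + 2 * n%:R * f / (m.+1)%:R
    = 2 * (n%:R * (m%:R * W%:R + f / (m.+1)%:R)) :> R by rewrite natrM; ring.
rewrite e in hX.
have n0 : 0 <= n%:R :> R by rewrite ler0n.
have := ler_wpM2l n0 (lerD a_bd b_bd).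
move: hX; set X := \sum_u \sum_v `|phi u v|.
set Y := n%:R * _; set q := Num.sqrt _ => hX hY.
rewrite ler_pdivrMr //.
have : n%:R * (q + q) = 2 * n%:R * q by ring.
lra.
Qed.
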